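(* Let $\pi\ge1$. For every input $\sigma=(g_1,\dots,g_T)\in\Sigma$ and every threshold $p\in[m,M]$, the outputs $\bar v_t$ of CR-Pursuit($\pi$) satisfy $$\sum_{t\in[T]:\ p(t)\le p} g_t(\bar v_t)\ \le\ \frac{1}{\pi}\,p\,\Delta,$$ where $p(t)=g_t'(0)$.
   Context: Fix $\Delta>0$ and $0<m\le M$. Let $\mathcal G$ be the family of all functions $g:[0,\Delta]\to\mathbb{R}$ that are concave, increasing and differentiable on $[0,\Delta]$ with $g(0)=0$ and $g'(0)\in[m,M]$. An input is a finite sequence $\sigma=(g_1,\dots,g_T)$, $T\ge1$, $g_t\in\mathcal G$; $\Sigma$ is the set of all inputs; $\sigma^{[1:t]}=(g_1,\dots,g_t)$ ($\sigma^{[1:0]}$ empty). $\eta_{OPT}(\sigma^{[1:t]})$ is the optimal value of $\max\sum_{s=1}^t g_s(v_s)$ s.t. $\sum_{s=1}^t v_s\le\Delta$, $v_s\ge0$ (and $0$ for the empty sequence). For $\pi\ge1$, CR-Pursuit($\pi$) outputs at time $t$ the smallest $\bar v_t\in[0,\Delta]$ with $g_t(\bar v_t)=\frac1\pi\big[\eta_{OPT}(\sigma^{[1:t]})-\eta_{OPT}(\sigma^{[1:t-1]})\big]$. *)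

(* Defs.v *)
From Stdlib Require Import Reals Lra Lia Classical ClassicalEpsilon.
Open Scope R_scope.

Fixpoint sum1 (f : nat -> R) (n : nat) : R :=
  match n with
  | O => 0
  | S k => sum1 f k + f (S k)
  end.

(* derivative of g at x in [0,Delta], relative to the domain [0,Delta]
   (one-sided at the endpoints) *)
Definition has_deriv_within (Delta : R) (g : R -> R) (x l : R) : Prop :=
  forall eps, 0 < eps -> exists delta, 0 < delta /\
    forall y, 0 <= y <= Delta -> y <> x -> Rabs (y - x) < delta ->
      Rabs ((g y - g x) / (y - x) - l) < eps.

Definition differentiable_on (Delta : R) (g : R -> R) : Prop :=
  forall x, 0 <= x <= Delta -> exists l, has_deriv_within Delta g x l.

Definition concave_on (Delta : R) (g : R -> R) : Prop :=
  forall x y lam, 0 <= x <= Delta -> 0 <= y <= Delta -> 0 <= lam <= 1 ->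
    lam * g x + (1 - lam) * g y <= g (lam * x + (1 - lam) * y).

(* "increasing" read as non-decreasing *)
Definition increasing_on (Delta : R) (g : R -> R) : Prop :=
  forall x y, 0 <= x <= Delta -> 0 <= y <= Delta -> x <= y -> g x <= g y.

(* g'(0): the (unique, since Delta > 0) right derivative at 0 *)
Definition deriv0 (Delta : R) (g : R -> R) : R :=
  epsilon (inhabits 0) (fun l => has_deriv_within Delta g 0 l).

Definition in_G (Delta m M : R) (g : R -> R) : Prop :=
  concave_on Delta g /\ increasing_on Delta g /\ differentiable_on Delta g /\
  g 0 = 0 /\
  (exists l, has_deriv_within Delta g 0 l /\ m <= l <= M).

Definition feasible_vals (Delta : R) (g : nat -> R -> R) (t : nat) (x : R) : Prop :=
  exists v : nat -> R,
    (forall s, (1 <= s <= t)%nat -> 0 <= v s) /\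
    sum1 v t <= Delta /\
    x = sum1 (fun s => g s (v s)) t.

Definition eta_OPT (Delta : R) (g : nat -> R -> R) (t : nat) : R :=
  epsilon (inhabits 0) (fun x => is_lub (feasible_vals Delta g t) x).

Definition cr_pursuit (Delta pi : R) (g : nat -> R -> R) (t : nat) : R :=
  let c := / pi * (eta_OPT Delta g t - eta_OPT Delta g (t - 1)) in
  epsilon (inhabits 0) (fun v =>
    0 <= v <= Delta /\ g t v = c /\
    forall w, 0 <= w <= Delta -> g t w = c -> v <= w).

(* Main.v *)
Require Import Defs.
From Stdlib Require Import Reals Lra Lia Classical ClassicalEpsilon.
Open Scope R_scope.

Lemma sum1_ext f h n : (forall s, (1 <= s <= n)%nat -> f s = h s) -> sum1 f n = sum1 h n.
Proof. induction n; simpl; intros H; auto. rewrite IHn by (intros; apply H; lia). rewrite H by lia. reflexivity. Qed.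

Lemma sum1_le f h n : (forall s, (1 <= s <= n)%nat -> f s <= h s) -> sum1 f n <= sum1 h n.
Proof. induction n; simpl; intros H; [lra|].
  assert (sum1 f n <= sum1 h n) by (apply IHn; intros; apply H; lia).
  assert (f (S n) <= h (S n)) by (apply H; lia). lra. Qed.

Lemma sum1_plus f h n : sum1 (fun s => f s + h s) n = sum1 f n + sum1 h n.
Proof. induction n; simpl; [lra|]. rewrite IHn; lra. Qed.

Lemma sum1_scal c f n : sum1 (fun s => c * f s) n = c * sum1 f n.
Proof. induction n; simpl; [lra|]. rewrite IHn; lra. Qed.

Lemma sum1_nonneg f n : (forall s, (1 <= s <= n)%nat -> 0 <= f s) -> 0 <= sum1 f n.
Proof. intros H. apply Rle_trans with (sum1 (fun _ => 0) n).
  { clear H. induction n; simpl; lra. } apply sum1_le; auto. Qed.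

Lemma sum1_elem v n s : (forall k, (1 <= k <= n)%nat -> 0 <= v k) -> (1 <= s <= n)%nat -> v s <= sum1 v n.
Proof. induction n; intros H Hs; [lia|]. simpl. destruct (Nat.eq_dec s (S n)).
 - subst. assert (0 <= sum1 v n) by (apply sum1_nonneg; intros; apply H; lia). lra.
 - assert (v s <= sum1 v n) by (apply IHn; [intros; apply H; lia| lia]).
   assert (0 <= v (S n)) by (apply H; lia). lra. Qed.

Lemma cont_of_deriv Delta f x l : has_deriv_within Delta f x l ->
  forall e, 0 < e -> exists d, 0 < d /\ forall y, 0 <= y <= Delta -> Rabs (y - x) < d -> Rabs (f y - f x) < e.
Proof.
  intros Hd e He. destruct (Hd 1 ltac:(lra)) as [dl [Hdl Hy]].
  set (L := Rabs l + 1). assert (HL : 0 < L) by (unfold L; pose proof (Rabs_pos l); lra).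
  exists (Rmin dl (e / L)). split. { apply Rmin_pos; auto. apply Rdiv_lt_0_compat; lra. }
  intros y Hy0 Hyx. destruct (Req_dec y x) as [->|Hne].
  { replace (f x - f x) with 0 by ring. rewrite Rabs_R0. lra. }
  assert (H1 : Rabs (y - x) < dl) by (pose proof (Rmin_l dl (e/L)); lra).
  assert (H2 : Rabs (y - x) < e / L) by (pose proof (Rmin_r dl (e/L)); lra).
  specialize (Hy y Hy0 Hne H1).
  set (q := (f y - f x) / (y - x)) in *.
  assert (Eq : f y - f x = q * (y - x)) by (unfold q; field; lra).
  rewrite Eq, Rabs_mult.
  assert (Hq : Rabs q < L).
  { unfold L. replace q with ((q - l) + l) by ring.
    pose proof (Rabs_triang (q - l) l). lra. }
  pose proof (Rabs_pos q). pose proof (Rabs_pos (y - x)).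
  assert (E : L * (e / L) = e) by (field; lra).
  assert (Rabs q * Rabs (y - x) <= L * Rabs (y - x)) by (apply Rmult_le_compat_r; lra).
  assert (L * Rabs (y - x) < L * (e / L)) by (apply Rmult_lt_compat_l; lra).
  lra.
Qed.

Lemma lin_bound Delta f d : concave_on Delta f -> f 0 = 0 -> has_deriv_within Delta f 0 d ->
  forall x, 0 <= x <= Delta -> f x <= d * x.
Proof.
  intros Hc H0 Hd x Hx. destruct (Req_dec x 0) as [->|Hx0]. { rewrite H0; lra. }
  apply Rnot_lt_le. intro Hlt.
  set (k := f x / x).
  assert (Hk : d < k). { unfold k. apply Rmult_lt_reg_r with x; [lra|].
    replace (f x / x * x) with (f x) by (field; lra). lra. }
  destruct (Hd (k - d) ltac:(lra)) as [dl [Hdl Hy]].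
  set (y := Rmin x (dl / 2)).
  assert (Hy0 : 0 < y) by (apply Rmin_pos; lra).
  assert (Hyx : y <= x) by apply Rmin_l.
  assert (Hyd : y <= dl / 2) by apply Rmin_r.
  assert (Hl : 0 <= y / x <= 1).
  { split; apply Rmult_le_reg_r with x; try lra;
    replace (y / x * x) with y by (field; lra); lra. }
  assert (Hconc := Hc x 0 (y / x) ltac:(lra) ltac:(lra) Hl).
  replace (y / x * x + (1 - y / x) * 0) with y in Hconc by (field; lra).
  rewrite H0 in Hconc.
  specialize (Hy y ltac:(lra) ltac:(lra) ltac:(rewrite Rminus_0_r, Rabs_pos_eq; lra)).
  rewrite H0, !Rminus_0_r in Hy.
  apply Rabs_def2 in Hy. destruct Hy as [Hy _].
  assert (E1 : f y / y < k) by lra.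
  assert (E2 : f y < k * y).
  { apply Rmult_lt_compat_r with (r := y) in E1; [|lra].
    replace (f y / y * y) with (f y) in E1 by (field; lra). lra. }
  assert (E3 : y / x * f x + (1 - y / x) * 0 = k * y) by (unfold k; field; lra).
  lra.
Qed.

Lemma min_sol Delta f c : 0 < Delta ->
  (forall x, 0 <= x <= Delta -> exists l, has_deriv_within Delta f x l) ->
  increasing_on Delta f -> f 0 = 0 -> 0 <= c <= f Delta ->
  exists v, 0 <= v <= Delta /\ f v = c /\ forall w, 0 <= w <= Delta -> f w = c -> v <= w.
Proof.
  intros HD Hdiff Hinc H0 Hc.
  destruct (Req_dec c 0) as [->|Hc0].
  { exists 0. split; [lra|]. split; auto. intros; lra. }
  set (B := fun x => 0 <= x <= Delta /\ f x < c).
  assert (HB0 : B 0) by (unfold B; lra).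
  assert (Hbd : bound B) by (exists Delta; intros x [Hx _]; lra).
  destruct (completeness B Hbd (ex_intro _ 0 HB0)) as [v0 [Hub Hleast]].
  assert (Hv0 : 0 <= v0) by (apply Hub; auto).
  assert (Hv1 : v0 <= Delta) by (apply Hleast; intros x [Hx _]; lra).
  assert (Hmin : forall w, 0 <= w <= Delta -> f w = c -> v0 <= w).
  { intros w Hw Hfw. apply Hleast. intros x [Hx Hfx].
    destruct (Rle_dec x w) as [|Hn]; auto. exfalso.
    assert (f w <= f x) by (apply Hinc; auto; lra). lra. }
  destruct (Hdiff v0 ltac:(lra)) as [l Hl].
  pose proof (cont_of_deriv _ _ _ _ Hl) as Hcont.
  exists v0. split; [lra|]. split; [|exact Hmin].
  destruct (Rtotal_order (f v0) c) as [Hlt|[Heq|Hgt]]; auto; exfalso.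
  - assert (Hv2 : v0 < Delta). { destruct (Req_dec v0 Delta) as [E|E]; [|lra]. rewrite E in Hlt; lra. }
    destruct (Hcont (c - f v0) ltac:(lra)) as [d [Hd Hy]].
    set (y := Rmin Delta (v0 + d / 2)).
    assert (y <= Delta) by apply Rmin_l.
    assert (y <= v0 + d/2) by apply Rmin_r.
    assert (v0 < y) by (apply Rmin_glb_lt; lra).
    specialize (Hy y ltac:(lra) ltac:(rewrite Rabs_pos_eq; lra)).
    apply Rabs_def2 in Hy.
    assert (B y) by (unfold B; lra).
    assert (y <= v0) by (apply Hub; auto). lra.
  - destruct (Hcont (f v0 - c) ltac:(lra)) as [d [Hd Hy]].
    assert (Hex : exists x, B x /\ v0 - d / 2 < x).
    { apply NNPP. intro Hn. assert (v0 <= v0 - d/2); [|lra].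
      apply Hleast. intros x Bx. apply Rnot_lt_le. intro. apply Hn. eauto. }
    destruct Hex as [x [Bx Hx]].
    assert (x <= v0) by (apply Hub; auto).
    destruct Bx as [Bx1 Bx2].
    specialize (Hy x Bx1 ltac:(rewrite Rabs_left1; lra)).
    apply Rabs_def2 in Hy. lra.
Qed.

Definition Yset Delta p (g : nat -> R -> R) t y := exists v : nat -> R,
  (forall s, (1 <= s <= t)%nat -> 0 <= v s) /\ sum1 v t <= Delta /\
  y = sum1 (fun s => g s (v s)) t + p * (Delta - sum1 v t).

Definition Yv Delta p g t := epsilon (inhabits 0) (fun y => is_lub (Yset Delta p g t) y).

Definition GH Delta m M T g := forall t, (1 <= t <= T)%nat -> in_G Delta m M (g t).

Lemma alloc_le Delta v t s : (forall k, (1 <= k <= t)%nat -> 0 <= v k) -> sum1 v t <= Delta ->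
  (1 <= s <= t)%nat -> 0 <= v s <= Delta.
Proof. intros H1 H2 Hs. pose proof (sum1_elem v t s H1 Hs). pose proof (H1 s Hs). lra. Qed.

Lemma gval_le Delta m M T g t v : GH Delta m M T g -> (t <= T)%nat ->
  (forall k, (1 <= k <= t)%nat -> 0 <= v k) -> sum1 v t <= Delta ->
  sum1 (fun s => g s (v s)) t <= sum1 (fun s => g s Delta) t.
Proof. intros HG Ht H1 H2. apply sum1_le. intros s Hs.
  destruct (HG s ltac:(lia)) as [_ [Hinc _]].
  pose proof (alloc_le _ _ _ _ H1 H2 Hs). apply Hinc; lra. Qed.

Lemma eta_lub Delta m M T g t : 0 < Delta -> GH Delta m M T g -> (t <= T)%nat ->
  is_lub (feasible_vals Delta g t) (eta_OPT Delta g t).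
Proof.
  intros HD HG Ht. unfold eta_OPT. apply epsilon_spec.
  assert (Hb : bound (feasible_vals Delta g t)).
  { exists (sum1 (fun s => g s Delta) t). intros x [v [H1 [H2 ->]]].
    eapply gval_le; eauto. }
  assert (Hne : exists x, feasible_vals Delta g t x).
  { exists (sum1 (fun s => g s ((fun _ => 0) s)) t). exists (fun _ => 0).
    split; [intros; lra|]. split; [|reflexivity].
    assert (sum1 (fun _ => 0) t = 0) by (clear; induction t; simpl; lra). lra. }
  destruct (completeness _ Hb Hne) as [x Hx]. eauto.
Qed.

Lemma Y_lub Delta m M T g p t : 0 < Delta -> 0 <= p -> GH Delta m M T g -> (t <= T)%nat ->
  is_lub (Yset Delta p g t) (Yv Delta p g t).
Proof.
  intros HD Hp HG Ht. unfold Yv. apply epsilon_spec.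
  assert (Hb : bound (Yset Delta p g t)).
  { exists (sum1 (fun s => g s Delta) t + p * Delta). intros x [v [H1 [H2 ->]]].
    pose proof (gval_le _ _ _ _ _ _ _ HG Ht H1 H2).
    pose proof (sum1_nonneg _ _ H1).
    assert (p * (Delta - sum1 v t) <= p * Delta) by (apply Rmult_le_compat_l; lra). lra. }
  assert (Hne : exists x, Yset Delta p g t x).
  { exists (sum1 (fun s => g s ((fun _ => 0) s)) t + p * (Delta - sum1 (fun _ => 0) t)).
    exists (fun _ => 0).
    split; [intros; lra|]. split; [|reflexivity].
    assert (sum1 (fun _ => 0) t = 0) by (clear; induction t; simpl; lra). lra. }
  destruct (completeness _ Hb Hne) as [x Hx]. eauto.
Qed.

Lemma lub_sum A B a b K : is_lub A a -> is_lub B b ->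
  (forall x y, A x -> B y -> x + y <= K) -> a + b <= K.
Proof.
  intros [Ha1 Ha2] [Hb1 Hb2] H.
  assert (forall y, B y -> y <= K - a).
  { intros y By. assert (a <= K - y); [|lra]. apply Ha2. intros x Ax. specialize (H x y Ax By). lra. }
  assert (b <= K - a) by (apply Hb2; intros y By; auto). lra.
Qed.

Lemma extend Delta g n w y : (forall s, (1 <= s <= n)%nat -> 0 <= w s) -> 0 <= y ->
  sum1 w n + y <= Delta ->
  feasible_vals Delta g (S n) (sum1 (fun s => g s (w s)) n + g (S n) y).
Proof.
  intros H1 Hy H2.
  exists (fun s => if Nat.eq_dec s (S n) then y else w s).
  split. { intros s Hs. destruct (Nat.eq_dec s (S n)); auto. apply H1; lia. }
  cbn [sum1]. destruct (Nat.eq_dec (S n) (S n)) as [_|C]; [|congruence].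
  rewrite (sum1_ext (fun s => if Nat.eq_dec s (S n) then y else w s) w).
  2: { intros s Hs. destruct (Nat.eq_dec s (S n)); [lia|auto]. }
  rewrite (sum1_ext (fun s => g s (if Nat.eq_dec s (S n) then y else w s)) (fun s => g s (w s))).
  2: { intros s Hs. destruct (Nat.eq_dec s (S n)); [lia|auto]. }
  split; [lra|reflexivity].
Qed.

Lemma mix_lam Delta m M T g p n v w lam : GH Delta m M T g -> 0 <= p -> (S n <= T)%nat ->
  (forall s, (1 <= s <= S n)%nat -> 0 <= v s) -> sum1 v (S n) <= Delta ->
  (forall s, (1 <= s <= n)%nat -> 0 <= w s) -> sum1 w n <= Delta ->
  0 <= lam <= 1 ->
  lam * sum1 v n + (1 - lam) * sum1 w n <= Delta - v (S n) ->
  (1 - lam) * sum1 v n + lam * sum1 w n <= sum1 v n + v (S n) ->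
  exists a b, feasible_vals Delta g (S n) a /\ Yset Delta p g n b /\
   (sum1 (fun s => g s (v s)) (S n) + p * (Delta - sum1 v (S n))) + sum1 (fun s => g s (w s)) n <= a + b.
Proof.
  intros HG Hp Hn Hv1 Hv2 Hw1 Hw2 Hl Hc1 Hc2.
  set (u := fun s => lam * v s + (1 - lam) * w s).
  set (z := fun s => (1 - lam) * v s + lam * w s).
  assert (Hvn : 0 <= v (S n)) by (apply Hv1; lia).
  assert (Hv1' : forall s, (1 <= s <= n)%nat -> 0 <= v s) by (intros; apply Hv1; lia).
  assert (Hsu : sum1 u n = lam * sum1 v n + (1 - lam) * sum1 w n).
  { unfold u. rewrite sum1_plus, !sum1_scal. reflexivity. }
  assert (Hsz : sum1 z n = (1 - lam) * sum1 v n + lam * sum1 w n).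
  { unfold z. rewrite sum1_plus, !sum1_scal. reflexivity. }
  assert (Hu : forall s, (1 <= s <= n)%nat -> 0 <= u s).
  { intros s Hs. unfold u. pose proof (Hv1' s Hs). pose proof (Hw1 s Hs). nra. }
  assert (Hz : forall s, (1 <= s <= n)%nat -> 0 <= z s).
  { intros s Hs. unfold z. pose proof (Hv1' s Hs). pose proof (Hw1 s Hs). nra. }
  assert (HvS : sum1 v (S n) = sum1 v n + v (S n)) by reflexivity.
  exists (sum1 (fun s => g s (u s)) n + g (S n) (v (S n))).
  exists (sum1 (fun s => g s (z s)) n + p * (Delta - sum1 z n)).
  split. { apply extend; auto. lra. }
  split. { exists z. split; auto. split; [lra|reflexivity]. }
  assert (Hconc : sum1 (fun s => g s (v s)) n + sum1 (fun s => g s (w s)) n <=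
                  sum1 (fun s => g s (u s)) n + sum1 (fun s => g s (z s)) n).
  { rewrite <- !sum1_plus. apply sum1_le. intros s Hs.
    destruct (HG s ltac:(lia)) as [Hc _].
    assert (Hv2' : sum1 v n <= Delta) by lra.
    pose proof (alloc_le _ _ _ _ Hv1' Hv2' Hs).
    pose proof (alloc_le _ _ _ _ Hw1 Hw2 Hs).
    pose proof (Hc (v s) (w s) lam ltac:(lra) ltac:(lra) Hl) as C1.
    pose proof (Hc (v s) (w s) (1 - lam) ltac:(lra) ltac:(lra) ltac:(lra)) as C2.
    replace (1 - (1 - lam)) with lam in C2 by ring.
    unfold u, z. lra. }
  assert (p * (Delta - sum1 v n - v (S n)) <= p * (Delta - sum1 z n))
    by (apply Rmult_le_compat_l; lra).
  change (sum1 (fun s => g s (v s)) (S n)) with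
    (sum1 (fun s => g s (v s)) n + g (S n) (v (S n))).
  rewrite HvS. lra.
Qed.

Lemma mix Delta m M T g p n v w : GH Delta m M T g -> 0 <= p -> (S n <= T)%nat ->
  (forall s, (1 <= s <= S n)%nat -> 0 <= v s) -> sum1 v (S n) <= Delta ->
  (forall s, (1 <= s <= n)%nat -> 0 <= w s) -> sum1 w n <= Delta ->
  exists a b, feasible_vals Delta g (S n) a /\ Yset Delta p g n b /\
   (sum1 (fun s => g s (v s)) (S n) + p * (Delta - sum1 v (S n))) + sum1 (fun s => g s (w s)) n <= a + b.
Proof.
  intros HG Hp Hn Hv1 Hv2 Hw1 Hw2.
  assert (HvS : sum1 v (S n) = sum1 v n + v (S n)) by reflexivity.
  assert (Hvn : 0 <= v (S n)) by (apply Hv1; lia).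
  set (V := sum1 v n) in *. set (W := sum1 w n) in *. set (v1 := v (S n)) in *.
  destruct (Rle_dec W (Delta - v1)) as [Hle|Hgt].
  - apply (mix_lam Delta m M T g p n v w 0); auto; fold V W v1; lra.
  - set (lam := (W - (Delta - v1)) / (W - V)).
    assert (HWV : 0 < W - V) by lra.
    assert (E : lam * (W - V) = W - (Delta - v1)) by (unfold lam; field; lra).
    assert (Hl : 0 <= lam <= 1).
    { split; apply Rmult_le_reg_r with (W - V); lra. }
    apply (mix_lam Delta m M T g p n v w lam); auto; fold V W v1.
    + assert (lam * V + (1 - lam) * W = W - lam * (W - V)) by ring. lra.
    + assert ((1 - lam) * V + lam * W = V + lam * (W - V)) by ring. lra.
Qed.

Lemma Yc Delta m M T g p n : 0 < Delta -> 0 <= p -> GH Delta m M T g -> (S n <= T)%nat ->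
  Yv Delta p g (S n) + eta_OPT Delta g n <= eta_OPT Delta g (S n) + Yv Delta p g n.
Proof.
  intros HD Hp HG Hn.
  apply (lub_sum (Yset Delta p g (S n)) (feasible_vals Delta g n)).
  - eapply Y_lub; eauto.
  - eapply eta_lub; eauto. lia.
  - intros x y [v [Hv1 [Hv2 ->]]] [w [Hw1 [Hw2 ->]]].
    destruct (mix Delta m M T g p n v w HG Hp Hn Hv1 Hv2 Hw1 Hw2) as [a [b [Ha [Hb Hab]]]].
    assert (a <= eta_OPT Delta g (S n)) by (apply (eta_lub Delta m M T g (S n) HD HG Hn); auto).
    assert (b <= Yv Delta p g n) by (apply (Y_lub Delta m M T g p n HD Hp HG ltac:(lia)); auto).
    lra.
Qed.

Lemma deriv0_spec Delta m M f : in_G Delta m M f -> has_deriv_within Delta f 0 (deriv0 Delta f).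
Proof. intros [_ [_ [_ [_ [l [Hl _]]]]]]. unfold deriv0. apply epsilon_spec. eauto. Qed.

Lemma YS Delta m M T g p n : 0 < Delta -> 0 <= p -> GH Delta m M T g -> (S n <= T)%nat ->
  deriv0 Delta (g (S n)) <= p -> Yv Delta p g (S n) <= Yv Delta p g n.
Proof.
  intros HD Hp HG Hn Hd.
  apply (Y_lub Delta m M T g p (S n) HD Hp HG Hn).
  intros x [v [Hv1 [Hv2 ->]]].
  assert (Hvn : 0 <= v (S n)) by (apply Hv1; lia).
  assert (HvS : sum1 v (S n) = sum1 v n + v (S n)) by reflexivity.
  assert (Hv1' : forall s, (1 <= s <= n)%nat -> 0 <= v s) by (intros; apply Hv1; lia).
  assert (Hel : Yset Delta p g n (sum1 (fun s => g s (v s)) n + p * (Delta - sum1 v n))).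
  { exists v. split; auto. split; [lra|reflexivity]. }
  assert (H1 := proj1 (Y_lub Delta m M T g p n HD Hp HG ltac:(lia)) _ Hel).
  pose proof (HG (S n) ltac:(lia)) as HGn.
  pose proof (deriv0_spec _ _ _ _ HGn) as Hder.
  destruct HGn as [Hc [_ [_ [H0 _]]]].
  assert (0 <= sum1 v n) by (apply sum1_nonneg; auto).
  assert (Hb := lin_bound _ _ _ Hc H0 Hder (v (S n)) ltac:(lra)).
  assert (deriv0 Delta (g (S n)) * v (S n) <= p * v (S n)) by (apply Rmult_le_compat_r; lra).
  change (sum1 (fun s => g s (v s)) (S n)) with
    (sum1 (fun s => g s (v s)) n + g (S n) (v (S n))).
  rewrite HvS.
  assert (p * (Delta - (sum1 v n + v (S n))) = p * (Delta - sum1 v n) - p * v (S n)) by ring.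
  lra.
Qed.

Lemma eta_mono Delta m M T g n : 0 < Delta -> GH Delta m M T g -> (S n <= T)%nat ->
  eta_OPT Delta g n <= eta_OPT Delta g (S n) /\
  eta_OPT Delta g (S n) <= eta_OPT Delta g n + g (S n) Delta.
Proof.
  intros HD HG Hn.
  pose proof (eta_lub _ _ _ _ _ n HD HG ltac:(lia)) as [U1 L1].
  pose proof (eta_lub _ _ _ _ _ (S n) HD HG Hn) as [U2 L2].
  pose proof (HG (S n) ltac:(lia)) as [_ [Hinc [_ [H0 _]]]].
  split.
  - apply L1. intros x [w [Hw1 [Hw2 ->]]].
    apply U2. pose proof (extend Delta g n w 0 Hw1 ltac:(lra) ltac:(lra)) as E.
    rewrite H0, Rplus_0_r in E. exact E.
  - apply L2. intros x [u [Hu1 [Hu2 ->]]].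
    assert (Hun : 0 <= u (S n)) by (apply Hu1; lia).
    assert (HuS : sum1 u (S n) = sum1 u n + u (S n)) by reflexivity.
    assert (Hu1' : forall s, (1 <= s <= n)%nat -> 0 <= u s) by (intros; apply Hu1; lia).
    assert (sum1 (fun s => g s (u s)) n <= eta_OPT Delta g n).
    { apply U1. exists u. split; auto. split; [lra|reflexivity]. }
    assert (0 <= sum1 u n) by (apply sum1_nonneg; auto).
    assert (g (S n) (u (S n)) <= g (S n) Delta) by (apply Hinc; lra).
    change (sum1 (fun s => g s (u s)) (S n)) with
      (sum1 (fun s => g s (u s)) n + g (S n) (u (S n))). lra.
Qed.

Lemma cr_val Delta m M T g pi n : 0 < Delta -> 1 <= pi -> GH Delta m M T g -> (S n <= T)%nat ->
  g (S n) (cr_pursuit Delta pi g (S n)) = / pi * (eta_OPT Delta g (S n) - eta_OPT Delta g n).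
Proof.
  intros HD Hpi HG Hn.
  destruct (eta_mono Delta m M T g n HD HG Hn) as [E1 E2].
  pose proof (HG (S n) ltac:(lia)) as [_ [Hinc [Hdiff [H0 _]]]].
  set (c := / pi * (eta_OPT Delta g (S n) - eta_OPT Delta g n)).
  assert (Hpi' : 0 < / pi) by (apply Rinv_0_lt_compat; lra).
  assert (Hpi1 : / pi <= 1) by (rewrite <- Rinv_1; apply Rinv_le_contravar; lra).
  assert (Hc : 0 <= c <= g (S n) Delta).
  { unfold c. split; [apply Rmult_le_pos; lra|].
    assert (0 <= g (S n) Delta) by (rewrite <- H0; apply Hinc; lra). nra. }
  destruct (min_sol Delta (g (S n)) c HD Hdiff Hinc H0 Hc) as [v Hv].
  unfold cr_pursuit. cbv zeta.
  replace (S n - 1)%nat with n by lia. fold c.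
  pose proof (epsilon_spec (inhabits 0) (fun v => 0 <= v <= Delta /\ g (S n) v = c /\
     forall w, 0 <= w <= Delta -> g (S n) w = c -> v <= w) (ex_intro _ v Hv)) as Hs.
  destruct Hs as [_ [Hs _]]. exact Hs.
Qed.

Lemma invariant Delta m M T g p n : 0 < Delta -> 0 <= p -> GH Delta m M T g -> (n <= T)%nat ->
  sum1 (fun t => if Rle_dec (deriv0 Delta (g t)) p
         then eta_OPT Delta g t - eta_OPT Delta g (t - 1) else 0) n
  + Yv Delta p g n - eta_OPT Delta g n <= p * Delta.
Proof.
  intros HD Hp HG. induction n; intros Hn.
  - cbn [sum1].
    pose proof (Y_lub _ _ _ _ _ p 0 HD Hp HG ltac:(lia)) as [_ LY].
    pose proof (eta_lub _ _ _ _ _ 0 HD HG ltac:(lia)) as [UE _].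
    assert (Yv Delta p g 0 <= p * Delta).
    { apply LY. intros x [v [_ [_ ->]]]. cbn [sum1]. lra. }
    assert (0 <= eta_OPT Delta g 0).
    { apply UE. exists (fun _ => 0). cbn [sum1]. split; [intros; lra|]. split; [lra|reflexivity]. }
    lra.
  - specialize (IHn ltac:(lia)). cbn [sum1].
    replace (S n - 1)%nat with n by lia.
    pose proof (Yc Delta m M T g p n HD Hp HG Hn).
    destruct (Rle_dec (deriv0 Delta (g (S n))) p) as [Hd|Hd].
    + pose proof (YS Delta m M T g p n HD Hp HG Hn Hd). lra.
    + lra.
Qed.

Theorem lemma10 (Delta m M pi : R) (T : nat) (g : nat -> R -> R) (p : R) :
  0 < Delta -> 0 < m -> m <= M -> 1 <= pi -> (1 <= T)%nat ->
  (forall t, (1 <= t <= T)%nat -> in_G Delta m M (g t)) ->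
  m <= p <= M ->
  sum1 (fun t => if Rle_dec (deriv0 Delta (g t)) p
                 then g t (cr_pursuit Delta pi g t) else 0) T
  <= / pi * p * Delta.
Proof.
  intros HD Hm HmM Hpi HT HG Hp.
  assert (Hp0 : 0 <= p) by lra.
  rewrite (sum1_ext _ (fun t => / pi * (if Rle_dec (deriv0 Delta (g t)) p
         then eta_OPT Delta g t - eta_OPT Delta g (t - 1) else 0))).
  2: { intros t Ht. destruct t as [|n]; [lia|].
       destruct (Rle_dec (deriv0 Delta (g (S n))) p).
       - rewrite (cr_val Delta m M T g pi n HD Hpi HG ltac:(lia)).
         replace (S n - 1)%nat with n by lia. reflexivity.
       - ring. }
  rewrite sum1_scal.
  pose proof (invariant Delta m M T g p T HD Hp0 HG (le_n T)) as Hinv.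
  assert (eta_OPT Delta g T <= Yv Delta p g T).
  { pose proof (eta_lub _ _ _ _ _ T HD HG (le_n T)) as [_ L].
    pose proof (Y_lub _ _ _ _ _ p T HD Hp0 HG (le_n T)) as [U _].
    apply L. intros x [v [Hv1 [Hv2 ->]]].
    assert (Yset Delta p g T (sum1 (fun s => g s (v s)) T + p * (Delta - sum1 v T)))
      by (exists v; auto).
    assert (0 <= p * (Delta - sum1 v T)) by (apply Rmult_le_pos; lra).
    pose proof (U _ H). lra. }
  assert (Hpi' : 0 < / pi) by (apply Rinv_0_lt_compat; lra).
  rewrite Rmult_assoc. apply Rmult_le_compat_l; lra.
Qed.
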